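(* Let $V$ be a finite dimensional real vector space and $n\in\mathbb N$. For $1\le k\le n$ let $\Gamma_k$ be a finitely generated cone in $V$ and $B_k$ a compact subset of $V$. Then there exists a compact subset $B$ of $V$ such that $$\bigcap_{k=1}^n(B_k+\Gamma_k)\subseteq B+\bigcap_{k=1}^n\Gamma_k.$$
   Context: A cone $\Gamma\subseteq V$ is finitely generated if there are finitely many $\omega_1,\dots,\omega_m\in V$ with $\Gamma=\sum_{j=1}^m\mathbb R_{\ge0}\omega_j$. *)

(* Defs.v *)
From HB Require Import structures.
From mathcomp Require Import all_boot all_order all_algebra.
From mathcomp Require Import all_classical all_reals all_analysis.
Set Implicit Arguments. Unset Strict Implicit. Unset Printing Implicit Defensive.
Import Order.TTheory GRing.Theory Num.Theory.
Import numFieldNormedType.Exports.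
Local Open Scope classical_set_scope.
Local Open Scope ring_scope.

Definition fin_gen_cone (R : realType) (d : nat) (G : set 'rV[R]_d) : Prop :=
  exists (m : nat) (w : 'I_m -> 'rV[R]_d),
    G = [set v | exists c : 'I_m -> R,
                   (forall j, 0 <= c j) /\ v = \sum_(j < m) c j *: w j].

Definition mink_sum (R : realType) (d : nat) (A C : set 'rV[R]_d) : set 'rV[R]_d :=
  [set x | exists a, A a /\ exists c, C c /\ x = a + c].

(* Main.v *)
Require Import Defs.
From HB Require Import structures.
From mathcomp Require Import all_boot all_order all_algebra.
From mathcomp Require Import all_classical all_reals all_analysis.
From mathcomp Require Import ring.
From mathcomp Require Import lra.
Import Order.TTheory GRing.Theory Num.Theory.
Local Open Scope ring_scope.

Section Dec.
Variables (R : realType) (I : finType) (i0 : I) (P : {ffun I -> R} -> Prop).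
Hypothesis HP : forall (t : R) {y e}, P y -> P e -> P (y - t *: e).

Definition supp (y : {ffun I -> R}) := [set i | y i != 0].
Definition good (S : {set I}) (e : {ffun I -> R}) :=
  [/\ P e, (forall i, 0 <= e i), e i0 = 1 & supp e = S].
Definition E (S : {set I}) : {ffun I -> R} :=
  match pselect (exists e, good S e) with
  | left h => projT1 (cid h)
  | right _ => 0 end.
Lemma E_good S : (exists e, good S e) -> good S (E S).
Proof. rewrite /E; case: pselect => // h _; exact: (projT2 (cid h)). Qed.

Lemma HPs y (c : R) : P y -> P (c *: y).
Proof.
move=> Py; have := HP (1 - c) Py Py.
by rewrite -{1}(scale1r y) -scalerBl opprB addrCA subrr addr0.
Qed.

Lemma decomp_aux N : forall y, (#|supp y| <= N)%N -> P y -> (forall i, 0 <= y i) ->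
  exists t : {set I} -> R, exists z : {ffun I -> R},
   [/\ (forall S, 0 <= t S), (forall S, t S = 0 \/ E S i0 = 1), P z, (forall i, 0 <= z i) &
       z i0 = 0 /\ y = \sum_S t S *: E S + z].
Proof.
elim: N => [|N IH] y hN Py y0;
  (have [yi0|yi0] := eqVneq (y i0) 0;
  [exists (fun _ => 0), y; split => //; [by left|split => //];
   by rewrite big1 ?add0r // => S _; rewrite scale0r|]).
  have : (0 < #|supp y|)%N by apply/card_gt0P; exists i0; rewrite inE.
  by rewrite lt0n -leqn0 hN.
set S := supp y.
have gS : exists e, good S e.
  exists ((y i0)^-1 *: y); split.
  - exact: HPs.
  - by move=> i; rewrite ffunE mulr_ge0 // invr_ge0.
  - by rewrite ffunE /= [_ *: _]mulVf.
  - apply/setP => i; rewrite !inE ffunE mulf_eq0 negb_or invr_eq0 yi0.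
    done.
have [Pe e0 ei0 se] := @E_good S gS.
set e := E S in Pe e0 ei0 se *.
have i0S : i0 \in S by rewrite inE.
case: (@arg_minP _ R I i0 (mem S) (fun i => y i / e i) i0S) => im isS Hmin.
set t0 := y im / e im.
have ySpos i : i \in S -> 0 < y i by rewrite inE => h; rewrite lt_def h y0.
have eSpos i : i \in S -> 0 < e i by rewrite -se inE => h; rewrite lt_def h e0.
have ynS i : i \notin S -> y i = 0 by rewrite inE negbK => /eqP.
have enS i : i \notin S -> e i = 0 by rewrite -se inE negbK => /eqP.
set y' := y - t0 *: e.
have y'0 i : 0 <= y' i.
  rewrite !ffunE subr_ge0 -[_ *: _]/(t0 * e i).
  case: (boolP (i \in S)) => iS; last by rewrite ynS // enS // mulr0.
  by have := Hmin i iS; rewrite ler_pdivlMr ?eSpos.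
have hy' : (#|supp y'| <= N)%N.
  have sub : supp y' \subset S :\ im.
    apply/fintype.subsetP => i; rewrite !inE !ffunE -[_ *: _]/(t0 * e i) => h.
    apply/andP; split.
      apply/eqP => eis; move: h; rewrite eis /t0 divfK ?subrr ?eqxx //.
      by rewrite gt_eqF // eSpos.
    apply: contraR h => iS; have iS' : i \notin S by rewrite inE. by rewrite (enS i iS') (ynS i iS') mulr0 subrr.
  have := subset_leq_card sub; rewrite [#|S :\ im|](_ : _ = #|S|.-1) => [h|].
    apply: leq_trans h _; rewrite -ltnS (leq_trans _ hN) // prednK //; apply/card_gt0P; by exists im.
  by rewrite (cardsD1 im S) (isS : im \in S).
have [t' [z [t'0 t'1 Pz z0 [zi0 ey']]]] := IH y' hy' (HP t0 Py Pe) y'0.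
exists (fun S' => t' S' + (if S' == S then t0 else 0)), z; split => //.
  move=> S'; rewrite addr_ge0 //; case: eqP => // _.
  by rewrite divr_ge0 ?y0 ?e0.
  move=> S'; case: eqP => [->|_]; first by right.
  by rewrite addr0.
split => //.
under eq_bigr do rewrite scalerDl.
rewrite big_split /=.
have -> : \sum_i (if i == S then t0 else 0) *: E i = t0 *: e.
  rewrite (bigD1 S) //= eqxx big1 ?addr0 // => S' /negPf ->; by rewrite scale0r.
by rewrite addrAC -ey' /y' subrK.
Qed.
End Dec.

Section Main.
Variables (R : realType) (d n : nat) (m : 'I_n -> nat)
  (w : forall k, 'I_(m k) -> 'rV[R]_d) (M : R).
Local Notation Ivar := (option (('I_n * 'I_d * option bool) + {k : 'I_n & 'I_(m k)})).
Definition cv (y : {ffun Ivar -> R}) k (j : 'I_(m k)) : R :=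
  y (Some (inr (Tagged (fun k => 'I_(m k)) j))).
Definition pv (y : {ffun Ivar -> R}) k i o : R := y (Some (inl (k, i, o))).
Definition X k (y : {ffun Ivar -> R}) : 'rV[R]_d :=
  \row_i (pv y k i (Some true) - pv y k i (Some false)) + \sum_(j < m k) cv y k j *: w k j.
Definition PP (y : {ffun Ivar -> R}) := (forall k k', X k y = X k' y) /\
  (forall k i, pv y k i (Some true) + pv y k i (Some false) + pv y k i None = M * y None).

Lemma XD k y z : X k (y + z) = X k y + X k z.
Proof.
rewrite /X /cv /pv; under eq_bigr do rewrite ffunE scalerDl.
rewrite big_split /= addrACA; congr (_ + _).
by apply/rowP => i; rewrite !mxE !ffunE opprD addrACA.
Qed.

Lemma XZ k (c : R) y : X k (c *: y) = c *: X k y.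
Proof.
rewrite /X /cv /pv; under eq_bigr do rewrite ffunE -scalerA.
rewrite -scaler_sumr scalerDr; congr (_ + _).
by apply/rowP => i; rewrite !mxE !ffunE mulrBr.
Qed.

Lemma XB k (t : R) y e : X k (y - t *: e) = X k y - t *: X k e.
Proof. by rewrite XD -scaleN1r XZ XZ scaleN1r. Qed.

Lemma X0 k : X k 0 = 0.
Proof. by have := XZ k 0 0; rewrite !scale0r. Qed.

Lemma X_sum k (I : finType) (F : I -> {ffun Ivar -> R}) :
  X k (\sum_i F i) = \sum_i X k (F i).
Proof. exact: (big_morph _ (XD k) (X0 k)). Qed.

Lemma PP_closed (t : R) y e : PP y -> PP e -> PP (y - t *: e).
Proof.
move=> [h1 h2] [h3 h4]; split.
  by move=> k k'; rewrite !XB (h1 k k') (h3 k k').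
move=> k i; move: (h2 k i) (h4 k i); rewrite /pv !ffunE => a b.
rewrite -[_ *: _]/(t * _) -[t *: e _]/(t * e _) -[t *: e (Some _)]/(t * e (Some _)).
rewrite -[t *: e None]/(t * e None).
rewrite mulrBr -a mulrCA -b; ring.
Qed.
End Main.
Arguments E {R I} i0 P S.
Arguments decomp_aux {R I} i0 P HP N y.
Arguments supp {R I}.
Arguments X {R d n m} w k y.
Arguments PP {R d n m} w M y.
Arguments cv {R d n m} y k j.
Arguments pv {R d n m} y k i o.
Arguments XD {R d n m} w k y z.
Arguments XZ {R d n m} w k c y.
Arguments X0 {R d n m} w k.
Arguments X_sum {R d n m} w k {I} F.
Arguments PP_closed {R d n m} w M t y e.
Import numFieldNormedType.Exports.
Local Open Scope classical_set_scope.

Lemma coord_le {R : realType} {d} (v : 'rV[R]_d) i : `|v ord0 i| <= `|v|.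
Proof.
have /mapP[j Hj ->] : `|v ord0 i| \in [seq `|v x.1 x.2| | x : 'I_1 * 'I_d].
  by apply/mapP; exists (ord0, i) => //=; rewrite mem_enum.
by rewrite [leRHS]/Num.Def.normr /= mx_normrE; apply/bigmax_geP; right => /=; exists j.
Qed.

Theorem lemma3p13 (R : realType) (d n : nat)
  (Gam : 'I_n -> set 'rV[R]_d) (Bk : 'I_n -> set 'rV[R]_d) :
  (forall k, fin_gen_cone (Gam k)) ->
  (forall k, compact (Bk k)) ->
  exists B : set 'rV[R]_d, compact B /\
    \bigcap_(k in [set: 'I_n]) mink_sum (Bk k) (Gam k) `<=` mink_sum B (\bigcap_(k in [set: 'I_n]) Gam k).
Proof.
move=> hG hB.
case: (posnP n) => [n0|npos].
  exists [set 0]; split; first exact: compact_set1.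
  move=> x _; exists 0; split => //; exists x; split; last by rewrite add0r.
  by move=> k; have := ltn_ord k; rewrite {2}n0.
pose k0 : 'I_n := Ordinal npos.
pose mw k := cid (hG k).
pose m k := proj1_sig (mw k).
pose wk k := cid (proj2_sig (mw k)).
pose w k : 'I_(m k) -> 'rV[R]_d := proj1_sig (wk k).
have hw k : Gam k = [set v | exists c : 'I_(m k) -> R,
                   (forall j, 0 <= c j) /\ v = \sum_(j < m k) c j *: w k j].
  exact: (proj2_sig (wk k)).
have hBd k := compact_bounded (hB k).
have [M HM] : exists M : R, forall k, globally (Bk k) [set x | `|x| <= M].
  apply: (@filter_ex _ (pinfty_nbhs R)).
  exact: (@filter_forall _ _ (fun k M => globally (Bk k) [set x | `|x| <= M]) _ _ hBd).
have HM' k b : Bk k b -> `|b| <= M by move=> hb; exact: (HM k b hb).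
clear HM.
pose PPy := PP w M.
pose EE := E None PPy.
pose K := \sum_S \sum_i `|X w k0 (EE S) ord0 i|.
exists [set v : 'rV[R]_d | forall i, `[- K, K]%classic (v ord0 i)]; split.
  have := @rV_compact R d (fun=> `[- K, K]%classic) (fun=> @segment_compact R (- K) K).
  exact.
move=> x Hx.
have hx k : exists p : 'rV[R]_d * ('I_(m k) -> R),
    Bk k p.1 /\ (forall j, 0 <= p.2 j) /\ x = p.1 + \sum_(j < m k) p.2 j *: w k j.
  have [b [Bb [c [Gc ->]]]] := Hx k I.
  move: Gc; rewrite hw => -[cc [cc0 ->]].
  by exists (b, cc).
pose bb k := (proj1_sig (cid (hx k))).1.
pose cc k := (proj1_sig (cid (hx k))).2.
have hbc k : Bk k (bb k) /\ (forall j, 0 <= cc k j) /\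
   x = bb k + \sum_(j < m k) cc k j *: w k j.
  by rewrite /bb /cc; case: (cid (hx k)) => [[b c]] /=.
pose y0 : {ffun _ -> R} := [ffun v => match v with
  | None => 1
  | Some (inl (k, i, Some true)) => (`|bb k ord0 i| + bb k ord0 i) / 2
  | Some (inl (k, i, Some false)) => (`|bb k ord0 i| - bb k ord0 i) / 2
  | Some (inl (k, i, None)) => M - `|bb k ord0 i|
  | Some (inr (existT k j)) => cc k j end].
have Xy0 k : X w k y0 = x.
  have [_ [_ ->]] := hbc k.
  rewrite /X /cv /pv; under eq_bigr do rewrite ffunE /=.
  congr (_ + _); apply/rowP => i; rewrite mxE !ffunE /= (_ : bb k 0 i = bb k ord0 i) //; lra.
have Py0 : PP w M y0.
  split; first by move=> k k'; rewrite !Xy0.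
  move=> k i; rewrite /pv !ffunE /= mulr1; set u := `|_|; set v := bb k ord0 i; lra.
have y00 v : 0 <= y0 v.
  rewrite ffunE; case: v => [[[[k i] [[]|]]|[k j]]|] //.
  - have := ler_norm (- bb k ord0 i); rewrite normrN; lra.
  - have := ler_norm (bb k ord0 i); lra.
  - have := coord_le (bb k) i; have := HM' k (bb k) (proj1 (hbc k)); lra.
  - by have [_ [+ _]] := hbc k; apply.
have [t [z [t0 t1 Pz z0 [zi0 ey0]]]] :=
  decomp_aux None (PP w M) (PP_closed w M) #|supp y0| y0 (leqnn _) Py0 y00.
have zp k i o : pv z k i o = 0.
  have := proj2 Pz k i; rewrite zi0 mulr0 /pv.
  have := z0 (Some (inl (k, i, Some true))).
  have := z0 (Some (inl (k, i, Some false))).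
  have := z0 (Some (inl (k, i, None))).
  by case: o => [[]|]; lra.
have Xz k : X w k z = \sum_(j < m k) cv z k j *: w k j.
  rewrite /X; have -> : \row_i (pv z k i (Some true) - pv z k i (Some false)) = 0.
    by apply/rowP => i; rewrite !mxE !zp subrr.
  by rewrite add0r.
pose g := X w k0 z.
have gG : (\bigcap_(k in [set: 'I_n]) Gam k) g.
  move=> k _; rewrite /g (proj1 Pz k0 k) Xz hw; exists (cv z k); split => // j.
  exact: z0.
have mass : \sum_S t S * EE S None = 1.
  have := congr1 (fun f : {ffun _ -> R} => f None) ey0.
  rewrite /= !ffunE sum_ffunE zi0 addr0 => h.
  rewrite [RHS]h; apply: eq_bigr => S _; by rewrite ffunE.
have tle S : t S <= 1.
  case: (t1 S) => [->|h1]; first exact: ler01.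
  rewrite -mass (bigD1 S) //= h1 mulr1 lerDl; apply: sumr_ge0 => S' _.
  by case: (t1 S') => [->|->]; rewrite ?mul0r ?mulr1.
have xe : x = \sum_S t S *: X w k0 (EE S) + g.
  rewrite -(Xy0 k0) {1}ey0 XD X_sum; congr (_ + _); apply: eq_bigr => S _.
  by rewrite XZ.
exists (x - g); split; last by exists g; split => //; rewrite subrK.
move=> i; rewrite {1}xe addrK summxE.
rewrite /= in_itv /= -ler_norml.
apply: le_trans (ler_norm_sum _ _ _) _; rewrite /K; apply: ler_sum => S _.
rewrite mxE normrM ger0_norm //.
apply: (@le_trans _ _ (`|X w k0 (EE S) ord0 i|)).
  by rewrite ler_piMl.
by rewrite (bigD1 i) //= lerDl sumr_ge0.
Qed.
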